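(* Fix $n\ge0$, a formula $\phi\in\mathcal{L}^1$ and a label $w$. (i) If $\mathtt{Prove_n}(w:\phi)$ returns true, then $w:\phi$ is derivable in $\mathsf{Ldm}_{n}^{1}\mathsf{L}$. (ii) If $\mathtt{Prove_n}(w:\phi)$ returns false, then $w:\phi$ is not derivable in $\mathsf{Ldm}_{n}^{1}\mathsf{L}$.
   Context: Single-agent setting: $Ag=\{1\}$. Formulas $\phi ::= p \mid \overline{p} \mid (\phi\wedge\phi) \mid (\phi\vee\phi) \mid \Box\phi \mid \Diamond\phi \mid [1]\phi \mid \langle 1\rangle\phi$; $\overline{\phi}$ swaps $p/\overline{p}$, $\wedge/\vee$, $\Box/\Diamond$, $[1]/\langle 1\rangle$. A labelled sequent $\mathcal{R},\Gamma$ consists of a multiset $\mathcal{R}$ of relational atoms $\mathcal{R}_1xy$ and a multiset $\Gamma$ of labelled formulas $x:\phi$. Calculus $\mathsf{Ldm}_{n}^{1}\mathsf{L}$ (premise(s) / conclusion; derivations are finite trees with $(\mathsf{id})$ leaves): $(\mathsf{id})$: / $\mathcal{R}, w:p, w:\overline{p},\Gamma$. $(\wedge)$: $\mathcal{R}, w:\phi\wedge\psi, w:\phi,\Gamma$ and $\mathcal{R}, w:\phi\wedge\psi, w:\psi,\Gamma$ / $\mathcal{R}, w:\phi\wedge\psi,\Gamma$. $(\vee)$: $\mathcal{R}, w:\phi\vee\psi, w:\phi, w:\psi,\Gamma$ / $\mathcal{R}, w:\phi\vee\psi,\Gamma$. $(\Box)$: $\mathcal{R}, w:\Box\phi, v:\phi,\Gamma$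 / $\mathcal{R}, w:\Box\phi,\Gamma$ ($v$ fresh). $(\Diamond)$: $\mathcal{R}, w:\Diamond\phi, u:\phi,\Gamma$ / $\mathcal{R}, w:\Diamond\phi,\Gamma$. $(\mathsf{IOA})$: $\mathcal{R},\mathcal{R}_1uv,\Gamma$ / $\mathcal{R},\Gamma$ ($v$ fresh). $([1])$: $\mathcal{R},\mathcal{R}_1wv, w:[1]\phi, v:\phi,\Gamma$ / $\mathcal{R}, w:[1]\phi,\Gamma$ ($v$ fresh). $(\mathsf{Pr}_1)$: $\mathcal{R}, w:\langle 1\rangle\phi, u:\phi,\Gamma$ / $\mathcal{R}, w:\langle 1\rangle\phi,\Gamma$, applicable only if $w=u$ or there are labels $w=z_0,\dots,z_k=u$ ($k\ge1$) with $\mathcal{R}_1z_lz_{l+1}\in\mathcal{R}$ or $\mathcal{R}_1z_{l+1}z_l\in\mathcal{R}$ for each $l<k$. $(\mathsf{APC}^1_n)$ (only if $n>0$): premises $\mathcal{R},\mathcal{R}_1w_kw_j,\Gamma$ for all $0\le k\le n-1$, $k+1\le j\le n$ / $\mathcal{R},\Gamma$. ''Fresh'' means not occurring in the conclusion. Graphs. $G(\Lambda)$ has the labels of $\Lambda$ as vertices and an edge $(x,y)$ for each $\mathcal{R}_1xy\in\Lambda$. A tree is a graph with a root having exactly one directed path to every other node; a forest is a disjoint union of trees. $\Lambda$ is forestlike iff $G(\Lambda)$ is a forest; its trees are choice-trees; $CT(w)$ is the choice-tree containing $w$. For forestlike $\Lambda$ and label $w$: $w$ is saturated iff (i) $w:\phi\in\Lambda$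 implies $w:\overline{\phi}\notin\Lambda$, (ii) $w:\phi\vee\psi\in\Lambda$ implies $w:\phi,w:\psi\in\Lambda$, (iii) $w:\phi\wedge\psi\in\Lambda$ implies $w:\phi\in\Lambda$ or $w:\psi\in\Lambda$. $w$ is $\Box$-realized iff for each $w:\Box\phi\in\Lambda$ some label $u$ has $u:\phi\in\Lambda$; $[1]$-realized iff for each $w:[1]\phi\in\Lambda$ some $u\in CT(w)$ has $u:\phi\in\Lambda$; $\Diamond$-propagated iff for each $w:\Diamond\phi\in\Lambda$, $u:\phi\in\Lambda$ for all labels $u$; $\langle1\rangle$-propagated iff for each $w:\langle1\rangle\phi\in\Lambda$, $u:\phi\in\Lambda$ for all $u\in CT(w)$. $\Lambda$ is $n$-choice consistent ($n>0$) iff $G(\Lambda)$ has at most $n$ choice-trees. $\Lambda$ is stable iff all labels are saturated, $\Box$- and $[1]$-realized, $\Diamond$- and $\langle1\rangle$-propagated, and (when $n>0$) $\Lambda$ is $n$-choice consistent. Algorithm $\mathtt{Prove_n}(\mathcal{R},\Gamma)$, steps tried in order: 1. If $w:p$ and $w:\overline{p}$ are both present, return true. 2. If the sequent is stable, return false. 3. If some $w$ is not saturated: (i) if $w:\phi\vee\psi$ is present but $w:\phi$ or $w:\psi$ absent, return $\mathtt{Prove_n}(\mathcal{R},w:\phi,w:\psi,\Gamma)$; (ii) if $w:\phi\wedge\psi$ is present but neither $w:\phi$ nor $w:\psi$, return false if $\mathtt{Prove_n}(\mathcal{R},w:\phi,\Gamma)$ or $\mathtt{Prove_n}(\mathcal{R},w:\psi,\Gamma)$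 returns false, else true. 4. If some $w:\langle1\rangle\phi$ is present and some $u\in CT(w)$ has $u:\phi$ absent, return $\mathtt{Prove_n}(\mathcal{R},u:\phi,\Gamma)$. 5. If some $w:\Diamond\phi$ is present and some label $u$ has $u:\phi$ absent, return $\mathtt{Prove_n}(\mathcal{R},u:\phi,\Gamma)$. 6. If some $w:[1]\phi$ is present with $u:\phi$ absent for all $u\in CT(w)$, return $\mathtt{Prove_n}(\mathcal{R},\mathcal{R}_1wv,v:\phi,\Gamma)$, $v$ fresh. 7. If some $w:\Box\phi$ is present with $u:\phi$ absent for all labels $u$, return $\mathtt{Prove_n}(\mathcal{R},v:\phi,\Gamma)$, $v$ fresh. 8. (Only when $n>0$.) If not $n$-choice consistent, pick distinct choice-tree roots $w_0,\dots,w_n$ and return false if $\mathtt{Prove_n}(\mathcal{R},\mathcal{R}_1w_kw_j,\Gamma)$ returns false for some $0\le k\le n-1$, $k+1\le j\le n$, else true. For $n=0$ step 8 is absent and stability omits $n$-choice consistency. *)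

(* Defs.v *)
From Stdlib Require Import List Arith Relations.
Import ListNotations.

Inductive form : Type :=
| Var : nat -> form
| NVar : nat -> form
| And : form -> form -> form
| Or : form -> form -> form
| Box : form -> form
| Dia : form -> form
| Stit : form -> form
| Cstit : form -> form.

Fixpoint neg (f : form) : form :=
  match f with
  | Var p => NVar p
  | NVar p => Var p
  | And a b => Or (neg a) (neg b)
  | Or a b => And (neg a) (neg b)
  | Box a => Dia (neg a)
  | Dia a => Box (neg a)
  | Stit a => Cstit (neg a)
  | Cstit a => Stit (neg a)
  end.

(* labels are natural numbers; relational atoms R_1 x y are pairs (x,y);
   labelled formulas x:phi are pairs (x,phi).  A sequent is a pair of lists
   (R, G) read as multisets: every rule below is stated via membership of the
   principal formula and adding premise material at the front, so
   derivability is invariant under permutation. *)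
Definition rels := list (nat * nat).
Definition forms := list (nat * form).

Definition label_in (R : rels) (G : forms) (x : nat) : Prop :=
  (exists y, In (x, y) R \/ In (y, x) R) \/ (exists f, In (x, f) G).

Definition fresh (R : rels) (G : forms) (v : nat) : Prop := ~ label_in R G v.

Definition uedge (R : rels) (a b : nat) : Prop := In (a, b) R \/ In (b, a) R.
Definition connected (R : rels) (x y : nat) : Prop :=
  clos_refl_trans nat (uedge R) x y.

Definition apc_pairs (n : nat) : list (nat * nat) :=
  flat_map (fun k => map (fun j => (k, j)) (seq (S k) (n - k))) (seq 0 n).

Inductive Derivable (n : nat) : rels -> forms -> Prop :=
| d_id : forall R G w p,
    In (w, Var p) G -> In (w, NVar p) G -> Derivable n R G
| d_and : forall R G w a b,
    In (w, And a b) G ->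
    Derivable n R ((w, a) :: G) -> Derivable n R ((w, b) :: G) ->
    Derivable n R G
| d_or : forall R G w a b,
    In (w, Or a b) G ->
    Derivable n R ((w, a) :: (w, b) :: G) -> Derivable n R G
| d_box : forall R G w a v,
    In (w, Box a) G -> fresh R G v ->
    Derivable n R ((v, a) :: G) -> Derivable n R G
| d_dia : forall R G w a u,
    In (w, Dia a) G ->
    Derivable n R ((u, a) :: G) -> Derivable n R G
| d_ioa : forall R G u v,
    fresh R G v ->
    Derivable n ((u, v) :: R) G -> Derivable n R G
| d_stit : forall R G w a v,
    In (w, Stit a) G -> fresh R G v ->
    Derivable n ((w, v) :: R) ((v, a) :: G) -> Derivable n R G
| d_pr : forall R G w a u,
    In (w, Cstit a) G -> connected R w u ->
    Derivable n R ((u, a) :: G) -> Derivable n R G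
| d_apc : forall R G (ws : list nat),
    0 < n -> length ws = S n ->
    (forall k j, In (k, j) (apc_pairs n) ->
       Derivable n ((nth k ws 0, nth j ws 0) :: R) G) ->
    Derivable n R G.

Definition inCT (R : rels) (G : forms) (w u : nat) : Prop :=
  label_in R G u /\ connected R w u.

Definition saturated (R : rels) (G : forms) (w : nat) : Prop :=
  (forall f, In (w, f) G -> ~ In (w, neg f) G) /\
  (forall a b, In (w, Or a b) G -> In (w, a) G /\ In (w, b) G) /\
  (forall a b, In (w, And a b) G -> In (w, a) G \/ In (w, b) G).

Definition box_realized (R : rels) (G : forms) (w : nat) : Prop :=
  forall a, In (w, Box a) G -> exists u, In (u, a) G.
Definition stit_realized (R : rels) (G : forms) (w : nat) : Prop :=
  forall a, In (w, Stit a) G -> exists u, inCT R G w u /\ In (u, a) G.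
Definition dia_propagated (R : rels) (G : forms) (w : nat) : Prop :=
  forall a, In (w, Dia a) G -> forall u, label_in R G u -> In (u, a) G.
Definition cstit_propagated (R : rels) (G : forms) (w : nat) : Prop :=
  forall a, In (w, Cstit a) G -> forall u, inCT R G w u -> In (u, a) G.

Definition choice_consistent (n : nat) (R : rels) (G : forms) : Prop :=
  ~ exists ls : list nat, length ls = S n /\
      (forall x, In x ls -> label_in R G x) /\
      (forall i j, i < S n -> j < S n -> i <> j ->
         ~ connected R (nth i ls 0) (nth j ls 0)).

Definition stable (n : nat) (R : rels) (G : forms) : Prop :=
  (forall w, label_in R G w ->
     saturated R G w /\ box_realized R G w /\ stit_realized R G w /\
     dia_propagated R G w /\ cstit_propagated R G w) /\
  (0 < n -> choice_consistent n R G).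

Definition is_root (R : rels) (G : forms) (x : nat) : Prop :=
  label_in R G x /\ forall y, ~ In (y, x) R.

Definition clash (G : forms) : Prop :=
  exists w p, In (w, Var p) G /\ In (w, NVar p) G.
Definition or_redex_at (G : forms) (w : nat) : Prop :=
  exists a b, In (w, Or a b) G /\ (~ In (w, a) G \/ ~ In (w, b) G).
Definition and_redex_at (G : forms) (w : nat) : Prop :=
  exists a b, In (w, And a b) G /\ ~ In (w, a) G /\ ~ In (w, b) G.
Definition redex3 (G : forms) : Prop :=
  exists w, or_redex_at G w \/ and_redex_at G w.
Definition redex4 (R : rels) (G : forms) : Prop :=
  exists w a u, In (w, Cstit a) G /\ inCT R G w u /\ ~ In (u, a) G.
Definition redex5 (R : rels) (G : forms) : Prop :=
  exists w a u, In (w, Dia a) G /\ label_in R G u /\ ~ In (u, a) G.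
Definition redex6 (R : rels) (G : forms) : Prop :=
  exists w a, In (w, Stit a) G /\ forall u, inCT R G w u -> ~ In (u, a) G.
Definition redex7 (R : rels) (G : forms) : Prop :=
  exists w a, In (w, Box a) G /\ forall u, ~ In (u, a) G.

(* Prove n R G b : some run of Prove_n on (R, G) returns b
   (steps tried in order; choices of w, u, fresh v, roots are arbitrary) *)
Inductive Prove (n : nat) : rels -> forms -> bool -> Prop :=
| p1 : forall R G, clash G -> Prove n R G true
| p2 : forall R G, ~ clash G -> stable n R G -> Prove n R G false
| p3i : forall R G w a b,
    ~ clash G -> ~ stable n R G ->
    In (w, Or a b) G -> (~ In (w, a) G \/ ~ In (w, b) G) ->
    forall r, Prove n R ((w, a) :: (w, b) :: G) r -> Prove n R G r
| p3ii : forall R G w a b,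
    ~ clash G -> ~ stable n R G -> ~ or_redex_at G w ->
    In (w, And a b) G -> ~ In (w, a) G -> ~ In (w, b) G ->
    forall r1 r2, Prove n R ((w, a) :: G) r1 -> Prove n R ((w, b) :: G) r2 ->
    Prove n R G (r1 && r2)
| p4 : forall R G w a u,
    ~ clash G -> ~ stable n R G -> ~ redex3 G ->
    In (w, Cstit a) G -> inCT R G w u -> ~ In (u, a) G ->
    forall r, Prove n R ((u, a) :: G) r -> Prove n R G r
| p5 : forall R G w a u,
    ~ clash G -> ~ stable n R G -> ~ redex3 G -> ~ redex4 R G ->
    In (w, Dia a) G -> label_in R G u -> ~ In (u, a) G ->
    forall r, Prove n R ((u, a) :: G) r -> Prove n R G r
| p6 : forall R G w a v,
    ~ clash G -> ~ stable n R G -> ~ redex3 G -> ~ redex4 R G -> ~ redex5 R G ->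
    In (w, Stit a) G -> (forall u, inCT R G w u -> ~ In (u, a) G) ->
    fresh R G v ->
    forall r, Prove n ((w, v) :: R) ((v, a) :: G) r -> Prove n R G r
| p7 : forall R G w a v,
    ~ clash G -> ~ stable n R G -> ~ redex3 G -> ~ redex4 R G -> ~ redex5 R G ->
    ~ redex6 R G ->
    In (w, Box a) G -> (forall u, ~ In (u, a) G) ->
    fresh R G v ->
    forall r, Prove n R ((v, a) :: G) r -> Prove n R G r
| p8 : forall R G (ws : list nat) (f : nat -> nat -> bool),
    ~ clash G -> ~ stable n R G -> ~ redex3 G -> ~ redex4 R G -> ~ redex5 R G ->
    ~ redex6 R G -> ~ redex7 R G ->
    0 < n -> ~ choice_consistent n R G ->
    length ws = S n -> NoDup ws -> (forall x, In x ws -> is_root R G x) ->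
    (forall k j, In (k, j) (apc_pairs n) ->
       Prove n ((nth k ws 0, nth j ws 0) :: R) G (f k j)) ->
    Prove n R G (forallb (fun kj => f (fst kj) (snd kj)) (apc_pairs n)).

(* Main.v *)
Require Import Defs.
From Stdlib Require Import List Arith Lia Relations Classical ClassicalEpsilon.
Import ListNotations.

Lemma prove_true_sound n R G b : Prove n R G b -> b = true -> Derivable n R G.
Proof.
  induction 1; intros Hb; subst.
  - destruct H as [w [p [H1 H2]]]. eapply d_id; eauto.
  - discriminate.
  - eapply d_or; eauto.
  - apply andb_prop in Hb as [Hb1 Hb2]. eapply d_and; eauto.
  - eapply d_pr; eauto. apply H3.
  - eapply d_dia; eauto.
  - eapply d_stit; eauto.
  - eapply d_box; eauto.
  - eapply d_apc; eauto. intros k j Hkj. match goal with Hx : forall k j, In _ _ -> (_ = true -> _) |- _ => apply Hx; auto end.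
    rewrite forallb_forall in Hb. apply (Hb (k, j) Hkj).
Qed.

Fixpoint sat (D : nat -> Prop) (E : nat -> nat -> Prop) (V : nat -> nat -> Prop)
  (x : nat) (f : form) : Prop :=
  match f with
  | Var p => V p x
  | NVar p => ~ V p x
  | And a b => sat D E V x a /\ sat D E V x b
  | Or a b => sat D E V x a \/ sat D E V x b
  | Box a => forall y, D y -> sat D E V y a
  | Dia a => exists y, D y /\ sat D E V y a
  | Stit a => forall y, D y -> E x y -> sat D E V y a
  | Cstit a => exists y, D y /\ E x y /\ sat D E V y a
  end.

Definition refuted (n : nat) (R : rels) (G : forms) : Prop :=
  exists D E V (I : nat -> nat),
    (forall x, E x x) /\ (forall x y, E x y -> E y x) /\
    (forall x y z, E x y -> E y z -> E x z) /\
    (0 < n -> forall f : nat -> nat, (forall i, D (f i)) ->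
       exists i j, i < j /\ j <= n /\ E (f i) (f j)) /\
    (forall x, D (I x)) /\
    (forall x y, In (x, y) R -> E (I x) (I y)) /\
    (forall x f, In (x, f) G -> ~ sat D E V (I x) f).

Lemma apc_in n i j : i < j -> j <= n -> In (i, j) (apc_pairs n).
Proof.
  intros. unfold apc_pairs. apply in_flat_map. exists i. split.
  - apply in_seq. lia.
  - apply in_map_iff. exists j. split; auto. apply in_seq. lia.
Qed.

Definition upd (I : nat -> nat) v z := fun x => if Nat.eqb x v then z else I x.

Lemma fresh_R R G v x y : fresh R G v -> In (x, y) R -> x <> v /\ y <> v.
Proof.
  intros Hf H. split; intro; subst; apply Hf; left; eauto.
Qed.
Lemma fresh_G R G v x f : fresh R G v -> In (x, f) G -> x <> v.
Proof. intros Hf H ?; subst; apply Hf; right; eauto. Qed.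

Lemma upd_ne I v z x : x <> v -> upd I v z x = I x.
Proof. intros. unfold upd. destruct (Nat.eqb_spec x v); congruence. Qed.
Lemma upd_eq I v z : upd I v z v = z.
Proof. unfold upd. rewrite Nat.eqb_refl. auto. Qed.

Lemma conn_E (E : nat -> nat -> Prop) I R x y :
  (forall x y, E x y -> E y x) -> (forall x y z, E x y -> E y z -> E x z) ->
  (forall x, E x x) ->
  (forall x y, In (x, y) R -> E (I x) (I y)) -> connected R x y -> E (I x) (I y).
Proof.
  intros Hs Ht Hr HR H. induction H.
  - destruct H; [apply HR | apply Hs, HR]; auto.
  - apply Hr.
  - eauto.
Qed.

Lemma soundness n R G : Derivable n R G -> ~ refuted n R G.
Proof.
  induction 1; intros [D [E [V [I [Hr [Hs [Ht [Hn [HD [HR HG]]]]]]]]]].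
  - apply (HG _ _ H0). simpl. intro Hc. apply (HG _ _ H). exact Hc.
  - assert (Hab := HG _ _ H). simpl in Hab.
    destruct (classic (sat D E V (I w) a)) as [Ha|Ha].
    + apply IHDerivable2. exists D, E, V, I. repeat split; auto.
      intros x f [Hx|Hx]; [inversion Hx; subst|]; eauto.
    + apply IHDerivable1. exists D, E, V, I. repeat split; auto.
      intros x f [Hx|Hx]; [inversion Hx; subst|]; eauto.
  - assert (Hab := HG _ _ H). simpl in Hab.
    apply IHDerivable. exists D, E, V, I. repeat split; auto.
    intros x f [Hx|[Hx|Hx]]; [inversion Hx; subst|inversion Hx; subst|]; eauto.
  - assert (Hab := HG _ _ H). simpl in Hab.
    apply not_all_ex_not in Hab as [z Hz].
    apply imply_to_and in Hz as [Dz Hz].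
    apply IHDerivable. exists D, E, V, (upd I v z). repeat split; auto.
    + intros x. unfold upd. destruct (Nat.eqb x v); auto.
    + intros x y Hxy. destruct (fresh_R _ _ _ _ _ H0 Hxy).
      rewrite !upd_ne; auto.
    + intros x f [Hx|Hx].
      * inversion Hx; subst. rewrite upd_eq. auto.
      * rewrite upd_ne; [|eapply fresh_G; eauto]. eauto.
  - assert (Hab := HG _ _ H). simpl in Hab.
    apply IHDerivable. exists D, E, V, I. repeat split; auto.
    intros x f [Hx|Hx]; [inversion Hx; subst|]; eauto.
  - apply IHDerivable. exists D, E, V, (upd I v (I u)). repeat split; auto.
    + intros x. unfold upd. destruct (Nat.eqb x v); auto.
    + intros x y [Hxy|Hxy].
      * injection Hxy as <- <-. rewrite upd_eq.
        destruct (Nat.eq_dec u v).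
        { subst. rewrite upd_eq. auto. }
        rewrite upd_ne; auto.
      * destruct (fresh_R _ _ _ _ _ H Hxy). rewrite !upd_ne; auto.
    + intros x f Hx. rewrite upd_ne; [|eapply fresh_G; eauto]. eauto.
  - assert (Hab := HG _ _ H). simpl in Hab.
    apply not_all_ex_not in Hab as [z Hz].
    apply imply_to_and in Hz as [Dz Hz].
    apply imply_to_and in Hz as [Ez Hz].
    assert (Hw : w <> v) by (eapply fresh_G; eauto).
    apply IHDerivable. exists D, E, V, (upd I v z). repeat split; auto.
    + intros x. unfold upd. destruct (Nat.eqb x v); auto.
    + intros x y [Hxy|Hxy].
      * injection Hxy as <- <-. rewrite upd_eq, upd_ne; auto.
      * destruct (fresh_R _ _ _ _ _ H0 Hxy). rewrite !upd_ne; auto.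
    + intros x f [Hx|Hx].
      * inversion Hx; subst. rewrite upd_eq. auto.
      * rewrite upd_ne; [|eapply fresh_G; eauto]. eauto.
  - assert (Hab := HG _ _ H). simpl in Hab.
    apply IHDerivable. exists D, E, V, I. repeat split; auto.
    intros x f [Hx|Hx]; [inversion Hx; subst|]; eauto.
    intro Hs'. apply Hab. exists (I x). repeat split; auto.
    eapply conn_E; eauto.
  - destruct (Hn H (fun i => I (nth i ws 0)) (fun i => HD _)) as [i [j [Hij [Hjn HE]]]].
    apply (H2 i j (apc_in _ _ _ Hij Hjn)).
    exists D, E, V, I. repeat split; auto.
    intros x y [Hxy|Hxy]; auto. inversion Hxy; subst. auto.
Qed.

Lemma conn_sym R x y : connected R x y -> connected R y x.
Proof.
  induction 1.
  - apply rt_step. destruct H; [right|left]; auto.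
  - apply rt_refl.
  - eapply rt_trans; eauto.
Qed.

Lemma nth_map_seq (f : nat -> nat) m i : i < m -> nth i (map f (seq 0 m)) 0 = f i.
Proof.
  intros H. rewrite nth_indep with (d' := f 0).
  - rewrite map_nth, seq_nth; auto.
  - rewrite length_map, length_seq; auto.
Qed.

Lemma stable_refuted n R G w0 f0 :
  In (w0, f0) G -> ~ clash G -> stable n R G -> refuted n R G.
Proof.
  intros H0 Hc [Hst Hcc].
  set (I := fun x => if excluded_middle_informative (label_in R G x) then x else w0).
  assert (Hw0 : label_in R G w0) by (right; eauto).
  assert (HI : forall x, label_in R G x -> I x = x).
  { intros x Hx. unfold I. destruct (excluded_middle_informative _); tauto. }
  assert (Htruth : forall f x, In (x, f) G ->
     ~ sat (label_in R G) (connected R) (fun p x => In (x, NVar p) G) x f).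
  { induction f; intros x Hx; simpl;
    (assert (Lx : label_in R G x) by (right; eauto));
    destruct (Hst x Lx) as [[Sa [Sb Sc]] [Bx [Sx [Dx Cx]]]].
    - exact (Sa _ Hx).
    - tauto.
    - intros [H1 H2]. destruct (Sc _ _ Hx) as [Ha|Hb]; [exact (IHf1 _ Ha H1)|exact (IHf2 _ Hb H2)].
    - intros [H1|H2]; destruct (Sb _ _ Hx) as [Ha Hb]; [exact (IHf1 _ Ha H1)|exact (IHf2 _ Hb H2)].
    - intros Hall. destruct (Bx _ Hx) as [u Hu].
      apply (IHf _ Hu). apply Hall. right; eauto.
    - intros [y [Dy Sy]]. exact (IHf _ (Dx _ Hx _ Dy) Sy).
    - intros Hall. destruct (Sx _ Hx) as [u [[Lu Cu] Hu]].
      exact (IHf _ Hu (Hall _ Lu Cu)).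
    - intros [y [Dy [Ey Sy]]]. exact (IHf _ (Cx _ Hx y (conj Dy Ey)) Sy). }
  exists (label_in R G), (connected R), (fun p x => In (x, NVar p) G), I.
  repeat split.
  - intros; apply rt_refl.
  - apply conn_sym.
  - intros; eapply rt_trans; eauto.
  - intros Hn f Hf. apply NNPP. intro Hno. apply (Hcc Hn).
    exists (map f (seq 0 (S n))). repeat split.
    + rewrite length_map, length_seq; auto.
    + intros x Hx. apply in_map_iff in Hx as [i [<- _]]. auto.
    + intros i j Hi Hj Hij Hconn.
      rewrite !nth_map_seq in Hconn by auto.
      apply Hno. destruct (Nat.lt_gt_cases i j) as [[Hlt|Hlt] _]; [exact Hij| |].
      * exists i, j. repeat split; auto; lia.
      * exists j, i. repeat split; auto; try lia. apply conn_sym; auto.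
  - intros x. unfold I. destruct (excluded_middle_informative _); auto.
  - intros x y Hxy. rewrite !HI by (left; eauto).
    apply rt_step. left; auto.
  - intros x f Hx. rewrite HI by (right; eauto). apply Htruth; auto.
Qed.

Lemma refuted_mono n R G R' G' :
  refuted n R' G' -> incl R R' -> incl G G' -> refuted n R G.
Proof.
  intros [D [E [V [I [Hr [Hs [Ht [Hn [HD [HR HG]]]]]]]]]] H1 H2.
  exists D, E, V, I. repeat split; auto.
Qed.

Lemma prove_false n R G b : Prove n R G b -> b = false ->
  forall w0 f0, In (w0, f0) G -> refuted n R G.
Proof.
  induction 1; intros Hb w0 f0 Hw0; subst.
  - discriminate.
  - eapply stable_refuted; eauto.
  - eapply refuted_mono; [eapply IHProve; eauto; right; right; eauto | apply incl_refl |].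
    intros x Hx; right; right; auto.
  - apply Bool.andb_false_iff in Hb as [Hb|Hb].
    + eapply refuted_mono; [eapply IHProve1; eauto; right; eauto | apply incl_refl |].
      intros x Hx; right; auto.
    + eapply refuted_mono; [eapply IHProve2; eauto; right; eauto | apply incl_refl |].
      intros x Hx; right; auto.
  - eapply refuted_mono; [eapply IHProve; eauto; right; eauto | apply incl_refl |].
    intros x Hx; right; auto.
  - eapply refuted_mono; [eapply IHProve; eauto; right; eauto | apply incl_refl |].
    intros x Hx; right; auto.
  - eapply refuted_mono; [eapply IHProve; eauto; right; eauto | |];
    intros x Hx; right; auto.
  - eapply refuted_mono; [eapply IHProve; eauto; right; eauto | apply incl_refl |].
    intros x Hx; right; auto.
  - apply Bool.not_true_iff_false in Hb.
    assert (exists kj, In kj (apc_pairs n) /\ f (fst kj) (snd kj) = false) as [[k j] [Hin Hf]].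
    { apply NNPP. intro Hno. apply Hb. apply forallb_forall. intros kj Hkj.
      destruct (f (fst kj) (snd kj)) eqn:E; auto. exfalso; apply Hno; eauto. }
    eapply refuted_mono; [match goal with Hx : forall k j, In _ _ -> (_ = false -> _) |- _ => eapply Hx; eauto end | |apply incl_refl].
    intros x Hx; right; auto.
Qed.

Theorem theorem5 (n : nat) (phi : form) (w : nat) :
  (Prove n [] [(w, phi)] true -> Derivable n [] [(w, phi)]) /\
  (Prove n [] [(w, phi)] false -> ~ Derivable n [] [(w, phi)]).
Proof.
  split.
  - intros H. eapply prove_true_sound; eauto.
  - intros H Hd. eapply soundness; [exact Hd|].
    eapply prove_false; eauto. left; reflexivity.
Qed.
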